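(* Let $B\in\mathbb R^{n\times m}$, $f:\mathbb R^m\to\mathbb R$, $h:\mathbb R^n\to\mathbb R$ differentiable, and $\mathcal I_{\mathcal V}$, $\mathcal I_{\mathcal Q}$ symmetric positive definite. Let $e(u)=u-\mathcal I_{\mathcal V}^{-1}\nabla f(u)$, $h_B(p)=h(p)+\frac12(B\mathcal I_{\mathcal V}^{-1}B^\top p,p)$, $\mathcal G^u(u,p)=-\mathcal I_{\mathcal V}^{-1}(\nabla f(u)+B^\top p)$, $\mathcal G^p(u,p)=-\mathcal I_{\mathcal Q}^{-1}(\nabla h_B(p)-Be(u))$. Assume $\nabla f$ and $\nabla h_B$ are Lipschitz continuous with constants $L_{f,\mathcal I_{\mathcal V}}$ and $L_{h_B,\mathcal I_{\mathcal Q}}$, i.e. $\|\nabla f(u_1)-\nabla f(u_2)\|_{\mathcal I_{\mathcal V}^{-1}}\le L_{f,\mathcal I_{\mathcal V}}\|u_1-u_2\|_{\mathcal I_{\mathcal V}}$ and $\|\nabla h_B(p_1)-\nabla h_B(p_2)\|_{\mathcal I_{\mathcal Q}^{-1}}\le L_{h_B,\mathcal I_{\mathcal Q}}\|p_1-p_2\|_{\mathcal I_{\mathcal Q}}$, and let $L_{e,\mathcal I_{\mathcal V}}$ be the Lipschitz constant of $e$ with respect to $\|\cdot\|_{\mathcal I_{\mathcal V}}$. Then for all $u_1,u_2\in\mathbb R^m$, $p_1,p_2\in\mathbb R^n$, with $v_i=u_i+\mathcal I_{\mathcal V}^{-1}B^\top p_i$, $$\|\mathcal G^u(u_1,p_1)-\mathcal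 G^u(u_2,p_2)\|_{\mathcal I_{\mathcal V}}\le L_{e,\mathcal I_{\mathcal V}}\|u_1-u_2\|_{\mathcal I_{\mathcal V}}+\|v_1-v_2\|_{\mathcal I_{\mathcal V}},$$ $$\|\mathcal G^p(u_1,p_1)-\mathcal G^p(u_2,p_2)\|_{\mathcal I_{\mathcal Q}}\le L_{e,\mathcal I_{\mathcal V}}L_S\|u_1-u_2\|_{\mathcal I_{\mathcal V}}+L_{h_B,\mathcal I_{\mathcal Q}}\|p_1-p_2\|_{\mathcal I_{\mathcal Q}},$$ where $L_S^2=\lambda_{\max}(\mathcal I_{\mathcal Q}^{-1}B\mathcal I_{\mathcal V}^{-1}B^\top)$.
   Context: For SPD $M$, $\|x\|_M=(Mx,x)^{1/2}$. *)

(* Defs.v *)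
From HB Require Import structures.
From mathcomp Require Import all_boot all_order all_algebra.
From mathcomp Require Import all_classical all_reals all_analysis.
Set Implicit Arguments. Unset Strict Implicit. Unset Printing Implicit Defensive.
Import Order.TTheory GRing.Theory Num.Theory.
Import numFieldNormedType.Exports.
Local Open Scope ring_scope.

Definition dotv (R : realType) (k : nat) (x y : 'cV[R]_k) : R := (x^T *m y) 0 0.

Definition spd (R : realType) (k : nat) (M : 'M[R]_k) : Prop :=
  M^T = M /\ forall x : 'cV[R]_k, x != 0 -> 0 < dotv (M *m x) x.

Definition mnorm (R : realType) (k : nat) (M : 'M[R]_k) (x : 'cV[R]_k) : R :=
  Num.sqrt (dotv (M *m x) x).

Definition is_gradient (R : realType) (k : nat) (f : 'cV[R]_k -> R)
  (g : 'cV[R]_k -> 'cV[R]_k) : Prop :=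
  forall u, differentiable f u /\ forall v, 'd f u v = dotv (g u) v.

Definition efun (R : realType) (m : nat) (IV : 'M[R]_m) (gf : 'cV[R]_m -> 'cV[R]_m)
  (u : 'cV[R]_m) : 'cV[R]_m := u - invmx IV *m gf u.

Definition hB (R : realType) (n m : nat) (B : 'M[R]_(n, m)) (IV : 'M[R]_m)
  (h : 'cV[R]_n -> R) (p : 'cV[R]_n) : R :=
  h p + 2^-1 * dotv (B *m invmx IV *m B^T *m p) p.

Definition Gu (R : realType) (n m : nat) (B : 'M[R]_(n, m)) (IV : 'M[R]_m)
  (gf : 'cV[R]_m -> 'cV[R]_m) (u : 'cV[R]_m) (p : 'cV[R]_n) : 'cV[R]_m :=
  - (invmx IV *m (gf u + B^T *m p)).

Definition Gp (R : realType) (n m : nat) (B : 'M[R]_(n, m)) (IV : 'M[R]_m)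
  (IQ : 'M[R]_n) (gf : 'cV[R]_m -> 'cV[R]_m) (ghB : 'cV[R]_n -> 'cV[R]_n)
  (u : 'cV[R]_m) (p : 'cV[R]_n) : 'cV[R]_n :=
  - (invmx IQ *m (ghB p - B *m efun IV gf u)).

Definition is_lambda_max (R : realType) (k : nat) (M : 'M[R]_k) (lam : R) : Prop :=
  eigenvalue M lam /\ forall a, eigenvalue M a -> a <= lam.

(* Main.v *)
Require Import Defs.
From HB Require Import structures.
From mathcomp Require Import all_boot all_order all_algebra.
From mathcomp Require Import all_classical all_reals all_analysis.
Set Implicit Arguments. Unset Strict Implicit. Unset Printing Implicit Defensive.
Import Order.TTheory GRing.Theory Num.Theory.
Import numFieldNormedType.Exports.
Local Open Scope ring_scope.

From mathcomp Require Import ring lra.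


Lemma dotvC (R : realType) k (x y : 'cV[R]_k) : dotv x y = dotv y x.
Proof.
by rewrite /dotv -[in LHS](trmxK y) -trmx_mul mxE.
Qed.

Lemma dotvDl (R : realType) k (x y z : 'cV[R]_k) : dotv (x + y) z = dotv x z + dotv y z.
Proof. by rewrite /dotv linearD /= mulmxDl mxE. Qed.

Lemma dotvZl (R : realType) k a (x z : 'cV[R]_k) : dotv (a *: x) z = a * dotv x z.
Proof. by rewrite /dotv linearZ /= -scalemxAl mxE. Qed.

Lemma dotvNl (R : realType) k (x z : 'cV[R]_k) : dotv (- x) z = - dotv x z.
Proof. by rewrite -scaleN1r dotvZl mulN1r. Qed.

Lemma dotvDr (R : realType) k (x y z : 'cV[R]_k) : dotv z (x + y) = dotv z x + dotv z y.
Proof. by rewrite dotvC dotvDl !(dotvC z). Qed.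

Lemma dotvZr (R : realType) k a (x z : 'cV[R]_k) : dotv z (a *: x) = a * dotv z x.
Proof. by rewrite dotvC dotvZl dotvC. Qed.

Lemma dotvNr (R : realType) k (x z : 'cV[R]_k) : dotv z (- x) = - dotv z x.
Proof. by rewrite dotvC dotvNl dotvC. Qed.

Lemma dotv_mull (R : realType) k l (A : 'M[R]_(k, l)) x y :
  dotv (A *m x) y = dotv x (A^T *m y).
Proof. by rewrite /dotv trmx_mul mulmxA. Qed.

Lemma dotvE (R : realType) k (x y : 'cV[R]_k) : dotv x y = \sum_i x i 0 * y i 0.
Proof. by rewrite /dotv mxE; apply: eq_bigr => i _; rewrite mxE. Qed.

Lemma dotv_ge0 (R : realType) k (x : 'cV[R]_k) : 0 <= dotv x x.
Proof. by rewrite dotvE; apply: sumr_ge0 => i _; rewrite -expr2 sqr_ge0. Qed.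

Lemma dotv_eq0 (R : realType) k (x : 'cV[R]_k) : dotv x x = 0 -> x = 0.
Proof.
rewrite dotvE => /eqP; rewrite psumr_eq0 => [/allP H|i _]; last by rewrite -expr2 sqr_ge0.
apply/matrixP => i j; rewrite (ord1 j) mxE.
have := H i (mem_index_enum _); rewrite implyTb -expr2 sqrf_eq0 => /eqP //.
Qed.


Definition qf (R : realType) k (V : 'M[R]_k) x := dotv (V *m x) x.

Lemma dotv_symm (R : realType) k (V : 'M[R]_k) x y : V^T = V ->
  dotv (V *m y) x = dotv (V *m x) y.
Proof. by move=> VT; rewrite dotv_mull VT dotvC. Qed.

Lemma qfD (R : realType) k (V : 'M[R]_k) x y : V^T = V ->
  qf V (x + y) = qf V x + 2 * dotv (V *m x) y + qf V y.
Proof.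
move=> VT; rewrite /qf mulmxDr dotvDl !dotvDr (dotv_symm _ _ VT); ring.
Qed.

Lemma qfZ (R : realType) k (V : 'M[R]_k) a x :
  qf V (a *: x) = a ^+ 2 * qf V x.
Proof. by rewrite /qf -scalemxAr dotvZl dotvZr; ring. Qed.

Lemma qfN (R : realType) k (V : 'M[R]_k) x : qf V (- x) = qf V x.
Proof. by rewrite -scaleN1r qfZ; ring. Qed.

Lemma qf0 (R : realType) k (V : 'M[R]_k) : qf V 0 = 0.
Proof. by rewrite /qf mulmx0 dotvE big1 // => i _; rewrite mxE mul0r. Qed.

Lemma spd_ge0 (R : realType) k (V : 'M[R]_k) x : spd V -> 0 <= qf V x.
Proof.
move=> [_ H]; have [->|/H/ltW //] := eqVneq x 0; by rewrite qf0.
Qed.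

Lemma spd_eq0 (R : realType) k (V : 'M[R]_k) x : spd V -> qf V x = 0 -> x = 0.
Proof.
move=> [_ H] q0; apply/eqP; apply: contraT => /H; rewrite -/(qf V x) q0 ltxx //.
Qed.

Lemma mnormE (R : realType) k (V : 'M[R]_k) x : mnorm V x = Num.sqrt (qf V x).
Proof. by []. Qed.

Lemma CS (R : realType) k (V : 'M[R]_k) x y : spd V ->
  dotv (V *m x) y <= mnorm V x * mnorm V y.
Proof.
move=> sV; have VT := sV.1.
have [->|xn0] := eqVneq x 0.
  by rewrite mulmx0 dotvE big1 ?mnormE ?qf0 ?sqrtr0 ?mul0r // => i _; rewrite mxE mul0r.
have [->|yn0] := eqVneq y 0.
  rewrite dotvE big1 ?mnormE ?qf0 ?sqrtr0 ?mulr0 // => i _.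
  by rewrite [in X in _ * X]mxE mulr0.
set b := dotv _ _; rewrite !mnormE.
set sx := Num.sqrt (qf V x); set sy := Num.sqrt (qf V y).
have qx : qf V x = sx ^+ 2 by rewrite sqr_sqrtr // spd_ge0.
have qy : qf V y = sy ^+ 2 by rewrite sqr_sqrtr // spd_ge0.
have sxp : 0 < sx.
  rewrite sqrtr_gt0 lt_neqAle spd_ge0 // andbT eq_sym; apply/eqP => /(spd_eq0 sV).
  by apply/eqP.
have syp : 0 < sy.
  rewrite sqrtr_gt0 lt_neqAle spd_ge0 // andbT eq_sym; apply/eqP => /(spd_eq0 sV).
  by apply/eqP.
have := spd_ge0 (sy *: x + (- sx) *: y) sV.
rewrite qfD // !qfZ qx qy -scalemxAr dotvZl dotvZr -/b => H.
have p : 0 < sx * sy by apply: mulr_gt0.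
nra.
Qed.

Lemma mnorm_tri (R : realType) k (V : 'M[R]_k) x y : spd V ->
  mnorm V (x + y) <= mnorm V x + mnorm V y.
Proof.
move=> sV; have := CS x y sV; rewrite !mnormE qfD ?sV.1 // => H.
have hx := sqrtr_ge0 (qf V x); have hy := sqrtr_ge0 (qf V y).
rewrite -(ger0_norm (addr_ge0 hx hy)) -sqrtr_sqr ler_sqrt ?sqr_ge0 //.
rewrite sqrrD !sqr_sqrtr ?spd_ge0 //; lra.
Qed.

Lemma mnormN (R : realType) k (V : 'M[R]_k) x : mnorm V (- x) = mnorm V x.
Proof. by rewrite !mnormE qfN. Qed.

Lemma mnorm_ge0 (R : realType) k (V : 'M[R]_k) x : 0 <= mnorm V x.
Proof. exact: sqrtr_ge0. Qed.

Section CSec.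
Local Open Scope classical_set_scope.
Local Open Scope ring_scope.

Lemma cont_sum (R : realType) (T : topologicalType) (I : finType) (F : I -> T -> R) :
  (forall i, continuous (F i)) -> continuous (fun x => \sum_i F i x).
Proof.
move=> HF.
suff H : forall s : seq I, continuous (fun x => \sum_(i <- s) F i x) by exact: H.
elim => [|a s IH].
  have -> : (fun x => \sum_(i <- [::]) F i x) = fun=> 0 by apply: funext => x; rewrite big_nil.
  exact: cst_continuous.
have -> : (fun x => \sum_(i <- a :: s) F i x) = F a + (fun x => \sum_(i <- s) F i x).
  by apply: funext => x; rewrite big_cons.
by move=> x; apply: continuousD; [exact: HF | exact: IH].
Qed.

Lemma qf_cont (R : realType) k (A : 'M[R]_k) :
  continuous (fun x : 'rV[R]_k => qf A x^T).
Proof.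
have -> : (fun x : 'rV[R]_k => qf A x^T) =
   (fun x => \sum_j (\sum_i (fun=> A j i) x * (fun y : 'rV[R]_k => y 0 i) x) * (fun y : 'rV[R]_k => y 0 j) x).
  apply: funext => x; rewrite /qf dotvE; apply: eq_bigr => j _; rewrite !mxE; congr (_ * _).
  by apply: eq_bigr => i _; rewrite mxE.
apply: cont_sum => j x; apply: continuousM; last exact: coord_continuous.
apply: cont_sum => i y; apply: continuousM; first exact: cst_continuous.
exact: coord_continuous.
Qed.

Lemma rayleigh (R : realType) k (M V : 'M[R]_k) : (0 < k)%N -> spd V ->
  exists d : 'cV[R]_k, d != 0 /\ exists mu,
    (forall x, qf M x <= mu * qf V x) /\ qf M d = mu * qf V d.
Proof.
move=> k0 sV.
pose f (x : 'rV[R]_k) := qf M x^T / qf V x^T.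
pose S : set 'rV[R]_k := fun x => `|x| = 1.
have qVpos : forall x : 'cV[R]_k, x != 0 -> 0 < qf V x by move=> x; apply: sV.2.
have nrm : forall x : 'rV[R]_k, x != 0 -> S (`|x|^-1 *: x).
  move=> x xn0; rewrite /S /= normrZ normfV normr_id mulVf //.
  by rewrite normr_eq0.
have fZ : forall (a : R) x, a != 0 -> f (a *: x) = f x.
  move=> a x a0; rewrite /f linearZ /= !qfZ.
  have [->|xn0] := eqVneq (x^T) 0; first by rewrite !qf0 !mulr0.
  have hV := qVpos _ xn0.
  rewrite invfM mulrACA mulfV ?mul1r // expf_neq0 //.
have S0 : (S !=set0)%classic.
  have c0 : (const_mx 1 : 'rV[R]_k) != 0.
    apply/eqP => /matrixP /(_ 0 (Ordinal k0)); rewrite !mxE => /eqP.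
    by rewrite oner_eq0.
  by eexists; exact: (nrm _ c0).
have Sc : compact S.
  apply: bounded_closed_compact.
    exists 1; split; first exact: real1.
    by move=> N /ltW N1 x Sx; rewrite /= Sx.
  apply: (preimage_closed (f := fun x : 'rV[R]_k => `|x|) (D := [set 1])).
    by move=> x _; apply: norm_continuous.
  exact: closed_eq.
have Sn0 : forall x, S x -> x^T != 0.
  move=> x Sx; apply/eqP => /(congr1 trmx); rewrite trmxK linear0 => x0.
  by move: Sx; rewrite /S /= x0 normr0 => /eqP; rewrite eq_sym oner_eq0.
have fc : {within S, continuous f}.
  apply: continuous_in_subspaceT => x /set_mem Sx.
  apply: (continuousM (s := fun x => qf M x^T) (t := fun x => (qf V x^T)^-1)); first exact: qf_cont.
  apply: continuousV; last exact: qf_cont.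
  by apply: lt0r_neq0; apply: qVpos; apply: Sn0.
have [c /set_mem Sc' cmax] := compact_EVT_max S0 Sc fc.
exists c^T; split; first exact: Sn0.
exists (f c); split; last first.
  rewrite /f divfK //; apply: lt0r_neq0; apply: qVpos; apply: Sn0; exact: Sc'.
move=> x; have [->|xn0] := eqVneq x 0; first by rewrite !qf0 mulr0.
have xTn0 : x^T != 0.
  by apply/eqP => h; move/eqP: xn0; apply; rewrite -(trmxK x) h trmx0.
have := cmax _ (mem_set (nrm _ xTn0)); rewrite fZ; last first.
  by rewrite invr_eq0 normr_eq0.
rewrite /f trmxK ler_pdivrMr //; exact: qVpos.
Qed.

End CSec.


Lemma psd_kernel (R : realType) k (A : 'M[R]_k) d : A^T = A ->
  (forall x, 0 <= qf A x) -> qf A d = 0 -> A *m d = 0.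
Proof.
move=> AT psd qd; set y := A *m d.
set s := dotv y y; set a := qf A y.
have s0 : 0 <= s by apply: dotv_ge0.
have a0 : 0 <= a by apply: psd.
set t := - s / (a + 1).
have := psd (d + t *: y); rewrite qfD // qfZ qd dotvZr -/y -/s -/a add0r => H.
have a1 : a + 1 != 0 by apply: lt0r_neq0; lra.
have E : 2 * (t * s) + t ^+ 2 * a = - (s ^+ 2 * (a + 2) / (a + 1) ^+ 2).
  by rewrite /t; field.
rewrite E oppr_ge0 ler_pdivrMr ?mul0r in H; last by rewrite exprn_gt0 //; lra.
have : s = 0 by nra.
exact: dotv_eq0.
Qed.

Lemma spd_unit (R : realType) k (V : 'M[R]_k) : spd V -> V \in unitmx.
Proof.
move=> sV; rewrite -unitmx_tr -row_free_unit -kermx_eq0; apply/eqP.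
apply/row_matrixP => i; rewrite row0.
have H : row i (kermx V^T) *m V^T = 0 by rewrite -row_mul mulmx_ker row0.
have : (row i (kermx V^T))^T = 0.
  apply: (spd_eq0 sV); rewrite /qf; have -> : V *m (row i (kermx V^T))^T = 0.
    by have := congr1 trmx H; rewrite trmx_mul trmxK trmx0.
  by rewrite dotvE big1 // => j _; rewrite mxE mul0r.
by move/(congr1 trmx); rewrite trmxK trmx0.
Qed.

Lemma key (R : realType) n m (B : 'M[R]_(n, m)) IV IQ LS :
  spd IV -> spd IQ ->
  is_lambda_max (invmx IQ *m B *m invmx IV *m B^T) (LS ^+ 2) ->
  forall d, qf (B^T *m invmx IQ *m B) d <= LS ^+ 2 * qf IV d.
Proof.
move=> sV sQ [_ Hmax] x.
set M := B^T *m invmx IQ *m B.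
have MT : M^T = M by rewrite /M !trmx_mul trmxK trmx_inv sQ.1 mulmxA.
have [m0|mpos] := posnP m.
  subst m; rewrite [x]flatmx0 !qf0 mulr0 //.
have [d [dn0 [mu [Hle Heq]]]] := rayleigh M mpos sV.
have AT : (mu *: IV - M)^T = mu *: IV - M by rewrite linearB linearZ /= sV.1 MT.
have qA : forall y, qf (mu *: IV - M) y = mu * qf IV y - qf M y.
  by move=> y; rewrite /qf mulmxBl -scalemxAl dotvDl dotvNl dotvZl.
have := psd_kernel AT _ _.
move=> /(_ d) Hk.
have Md : M *m d = mu *: (IV *m d).
  apply/eqP; rewrite eq_sym -subr_eq0 scalemxAl -mulmxBl; apply/eqP; apply: Hk.
    by move=> y; rewrite qA subr_ge0.
  by rewrite qA Heq subrr.
have mule : mu <= LS ^+ 2.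
  have [Bd0|Bdn0] := eqVneq (B *m d) 0.
    have : mu *: (IV *m d) = 0 by rewrite -Md /M -mulmxA Bd0 mulmx0.
    move/eqP; rewrite scalemx_eq0 => /orP [/eqP -> | /eqP IVd0]; first exact: sqr_ge0.
    exfalso; move/eqP: dn0; apply; apply: (spd_eq0 sV).
    by rewrite /qf IVd0 dotvE big1 // => j _; rewrite mxE mul0r.
  apply: Hmax; apply/eigenvalueP; exists (d^T *m B^T); last first.
    by apply: contraNneq Bdn0 => h; rewrite -(trmxK (B *m d)) trmx_mul h trmx0.
  have hM : d^T *m M = mu *: (d^T *m IV).
    by rewrite -[M]MT -trmx_mul Md linearZ /= trmx_mul sV.1.
  have hM' : d^T *m B^T *m invmx IQ *m B = mu *: (d^T *m IV) by rewrite -hM /M !mulmxA.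
  rewrite !mulmxA hM' -!scalemxAl -(mulmxA _ IV) mulmxV ?mulmx1 //.
  exact: spd_unit.
apply: le_trans (Hle x) _; apply: ler_wpM2r => //; exact: spd_ge0.
Qed.


Lemma mnorm_inv (R : realType) k (Q : 'M[R]_k) w : spd Q ->
  mnorm Q (invmx Q *m w) = mnorm (invmx Q) w.
Proof.
move=> sQ; rewrite !mnormE /qf mulKVmx; [by rewrite dotvC | exact: spd_unit].
Qed.

Lemma zid1 (R : realType) k (u1 u2 a1 a2 b1 b2 : 'cV[R]_k) :
  - (a1 + b1) - - (a2 + b2) = (u1 - a1 - (u2 - a2)) + - (u1 + b1 - (u2 + b2)).
Proof. by apply/matrixP => i j; rewrite !mxE; ring. Qed.

Lemma zid2 (R : realType) k (g1 g2 c1 c2 : 'cV[R]_k) :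
  - (g1 - c1) - - (g2 - c2) = - (g1 - g2) + (c1 - c2).
Proof. by apply/matrixP => i j; rewrite !mxE; ring. Qed.

Theorem lemma3p3 (R : realType) (n m : nat) (B : 'M[R]_(n, m))
  (f : 'cV[R]_m -> R) (h : 'cV[R]_n -> R)
  (gf : 'cV[R]_m -> 'cV[R]_m) (ghB : 'cV[R]_n -> 'cV[R]_n)
  (IV : 'M[R]_m) (IQ : 'M[R]_n) (Lf LhB Le LS : R) :
  spd IV -> spd IQ ->
  (forall p, differentiable h p) ->
  is_gradient f gf ->
  is_gradient (hB B IV h) ghB ->
  (forall u1 u2, mnorm (invmx IV) (gf u1 - gf u2) <= Lf * mnorm IV (u1 - u2)) ->
  (forall p1 p2, mnorm (invmx IQ) (ghB p1 - ghB p2) <= LhB * mnorm IQ (p1 - p2)) ->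
  (forall u1 u2, mnorm IV (efun IV gf u1 - efun IV gf u2) <= Le * mnorm IV (u1 - u2)) ->
  0 <= LS ->
  is_lambda_max (invmx IQ *m B *m invmx IV *m B^T) (LS ^+ 2) ->
  forall (u1 u2 : 'cV[R]_m) (p1 p2 : 'cV[R]_n),
    let v1 := u1 + invmx IV *m B^T *m p1 in
    let v2 := u2 + invmx IV *m B^T *m p2 in
    mnorm IV (Gu B IV gf u1 p1 - Gu B IV gf u2 p2)
      <= Le * mnorm IV (u1 - u2) + mnorm IV (v1 - v2) /\
    mnorm IQ (Gp B IV IQ gf ghB u1 p1 - Gp B IV IQ gf ghB u2 p2)
      <= Le * LS * mnorm IV (u1 - u2) + LhB * mnorm IQ (p1 - p2).
Proof.
move=> sV sQ _ _ _ _ HLh HLe LS0 Hlam u1 u2 p1 p2 v1 v2.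
set e1 := efun IV gf u1; set e2 := efun IV gf u2.
split.
  have -> : Gu B IV gf u1 p1 - Gu B IV gf u2 p2 = (e1 - e2) + - (v1 - v2).
    rewrite /Gu /e1 /e2 /efun /v1 /v2 !mulmxDr !mulmxA; exact: zid1.
  apply: le_trans (mnorm_tri _ _ sV) _; rewrite mnormN.
  by apply: lerD => //; exact: HLe.
have -> : Gp B IV IQ gf ghB u1 p1 - Gp B IV IQ gf ghB u2 p2 =
    - (invmx IQ *m (ghB p1 - ghB p2)) + invmx IQ *m (B *m (e1 - e2)).
  rewrite /Gp -/e1 -/e2 !mulmxBr mulmxA; exact: zid2.
apply: le_trans (mnorm_tri _ _ sQ) _; rewrite mnormN addrC.
apply: lerD; last by rewrite mnorm_inv.
rewrite mnorm_inv // mnormE /qf dotvC dotv_mull dotvC mulmxA mulmxA.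
apply: le_trans (_ : Num.sqrt (LS ^+ 2 * qf IV (e1 - e2)) <= _).
  rewrite ler_sqrt; first exact: key.
  by apply: mulr_ge0; [exact: sqr_ge0 | exact: spd_ge0].
rewrite sqrtrM ?sqr_ge0 // sqrtr_sqr ger0_norm // -mnormE mulrAC mulrC.
by apply: ler_wpM2r => //; exact: HLe.
Qed.
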